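(* Let $d\ge2$, $0\le r\le d-1$ and $M\ge1$ be integers. Let $N_{r,d}(M)$ be the number of distinct orbits $o(\mathbf{x})$ with $\mathbf{x}\in[0,M]^2\cap\mathbb{Z}^2$ and $\operatorname{length}(o(\mathbf{x}))\equiv r\pmod d$. Then $$N_{r,d}(M)=\begin{cases}0,& \text{if } 2\,\|\, d \text{ and } 2\nmid r,\ \text{or } 4\mid d\text{ and } 4\nmid r;\\ \frac1d M^2+O(M),&\text{if } 2\,\|\, d\text{ and } 2\mid r;\\ \frac2dM^2+O(M),&\text{if } 4\mid d\text{ and }4\mid r;\\ \frac1{2d}M^2+O(M),&\text{if }2\nmid d.\end{cases}$$ Here $2\,\|\,d$ means $2\mid d$ and $4\nmid d$.
   Context: Define $\mathcal K_1,\mathcal K_2:\mathbb{Z}^2\to\mathbb{Z}^2$ by $\mathcal K_1(x_1,x_2)=(-x_1+x_2,x_2)$ and $\mathcal K_2(x_1,x_2)=(x_1,x_1-x_2)$. The orbit $o(\mathbf{x})$ of $\mathbf{x}=(x_1,x_2)$ is the set of points obtained from $\mathbf{x}$ by repeatedly applying $\mathcal K_1$ and $\mathcal K_2$. It consists of $(x_1,x_2)$, $(-x_1+x_2,x_2)$, $(-x_1+x_2,-x_1)$, $(-x_2,-x_1)$, $(-x_2,x_1-x_2)$, $(x_1,x_1-x_2)$. Orbits partition $\mathbb{Z}^2$. The length (perimeter) of the orbit is the Euclidean length of the closed path through these six points in the listed order: $$\operatorname{length}(o(\mathbf{x}))=2\big(|2x_1-x_2|+|x_1+x_2|+|2x_2-x_1|\big).$$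 *)

(* Defs.v *)
From HB Require Import structures.
From mathcomp Require Import all_boot all_order all_algebra.
From mathcomp Require Import finmap.
Set Implicit Arguments. Unset Strict Implicit. Unset Printing Implicit Defensive.
Import Order.TTheory GRing.Theory Num.Theory.
Local Open Scope ring_scope.

Definition pt := (int * int)%type.

Definition K1 (x : pt) : pt := (- x.1 + x.2, x.2).
Definition K2 (x : pt) : pt := (x.1, x.1 - x.2).

Definition orbit (x : pt) : {fset pt} :=
  [fset x; K1 x; K2 (K1 x); K1 (K2 (K1 x)); K2 (K1 (K2 (K1 x)));
        K1 (K2 (K1 (K2 (K1 x))))]%fset.

(* Perimeter of the orbit. *)
Definition orbit_length (x : pt) : int :=
  2 * (`|2 * x.1 - x.2| + `|x.1 + x.2| + `|2 * x.2 - x.1|).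

Definition grid (M : nat) : seq pt :=
  [seq ((i%:Z), (j%:Z)) | i <- iota 0 M.+1, j <- iota 0 M.+1].

Definition N_count (r d M : nat) : nat :=
  size (undup [seq orbit x | x <- grid M &
                 (orbit_length x == r%:Z %[mod d%:Z])%Z]).

(* Main.v *)
Require Import Defs.
From HB Require Import structures.
From mathcomp Require Import all_boot all_order all_algebra.
From mathcomp Require Import finmap zify ring lra.
Import Order.TTheory GRing.Theory Num.Theory.

Local Open Scope nat_scope.

Lemma count_block m k x : 0 < m ->
  count (fun s => s %% m == k %% m) (iota x m) = 1.
Proof.
move=> m0; elim: x => [|x IH].
  rewrite (@eq_in_count _ _ (pred1 (k %% m))); last first.
    by move=> s; rewrite mem_iota add0n => /andP [_ sm]; rewrite /= modn_small.
  by rewrite count_uniq_mem ?iota_uniq // mem_iota add0n ltn_pmod.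
case: m m0 IH => // m' _.
have E : iota x.+1 m'.+1 = iota x.+1 m' ++ [:: x.+1 + m'] by rewrite -[m'.+1]addn1 iotaD.
rewrite E count_cat /= => <-.
have -> : x.+1 + m' = x + m'.+1 by rewrite addnS addSn.
by rewrite modnDr addnC addn0.
Qed.

Lemma count_res m k lo n : 0 < m ->
  let c := count (fun s => s %% m == k %% m) (iota lo n) in
  (c * m <= n + m) && (n <= c * m + m).
Proof.
move=> m0 /=; elim: n {-2}n (leqnn n) lo => [|N IH] n nN lo.
  by move: nN; rewrite leqn0 => /eqP ->.
case: (ltnP n m) => nm.
  have c1 : count (fun s => s %% m == k %% m) (iota lo n) <= 1.
    rewrite -(@count_block m k lo m0) -(subnKC (ltnW nm)) iotaD count_cat leq_addr //.
  apply/andP; split.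
    case: (count _ _) c1 => [|[|]] //= _; lia.
  lia.
rewrite -(subnKC nm) iotaD count_cat count_block //.
have := IH (n - m) ltac:(lia) (lo + m).
lia.
Qed.

Lemma count_sum (T : Type) (a : pred T) s : count a s = \sum_(x <- s) (a x : nat).
Proof. by elim: s => [|x s IH]; rewrite ?big_nil ?big_cons //= IH. Qed.

Lemma count_window (p : pred nat) N lo hi : lo <= hi <= N ->
  \sum_(i <- iota 0 N) nat_of_bool ((lo <= i < hi) && p i) = count p (iota lo (hi - lo)).
Proof.
move=> /andP [h1 h2].
rewrite -(@count_sum _ (fun i => (lo <= i < hi) && p i)).
have E : iota 0 N = iota 0 lo ++ iota lo (hi - lo) ++ iota hi (N - hi).
  rewrite {1}(_ : N = lo + ((hi - lo) + (N - hi))); last by lia.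
  rewrite iotaD iotaD add0n; congr (_ ++ (_ ++ iota _ _)); lia.
rewrite E !count_cat.
rewrite (@eq_in_count _ _ pred0); last by move=> i; rewrite mem_iota => ?; apply/negbTE; lia.
rewrite (@eq_in_count _ _ pred0 (iota hi _)); last by move=> i; rewrite mem_iota => ?; apply/negbTE; lia.
rewrite !count_pred0 add0n addn0; apply: eq_in_count => i; rewrite mem_iota => H.
by rewrite (_ : (lo <= i < hi) = true) //; lia.
Qed.

Lemma sum_up (s : seq nat) (f n : nat -> nat) m e :
  (forall j, j \in s -> f j * m <= n j + e) ->
  (\sum_(j <- s) f j) * m <= \sum_(j <- s) n j + size s * e.
Proof.
elim: s => [|x s IH] H; rewrite ?big_nil ?big_cons //=.
have := H x (mem_head _ _); have := IH (fun j js => H j ltac:(by rewrite inE js orbT)).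
rewrite mulnDl mulSn; lia.
Qed.

Lemma sum_lo (s : seq nat) (f n : nat -> nat) m e :
  (forall j, j \in s -> n j <= f j * m + e) ->
  \sum_(j <- s) n j <= (\sum_(j <- s) f j) * m + size s * e.
Proof.
elim: s => [|x s IH] H; rewrite ?big_nil ?big_cons //=.
have := H x (mem_head _ _); have := IH (fun j js => H j ltac:(by rewrite inE js orbT)).
rewrite mulnDl mulSn; lia.
Qed.

Lemma sum_half M : 4 * (\sum_(j <- iota 0 M.+1) j./2) + odd M = M * M.
Proof.
elim: M => [|M IH]; first by rewrite big_cons big_nil.
rewrite -[M.+2]addn1 iotaD big_cat big_seq1 add0n.
move: IH; rewrite mulnDr.
move: (\sum_(j <- iota 0 M.+1) j./2) => S.
rewrite mulSn mulnS; lia.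
Qed.



Lemma gpos d : 0 < gcdn 4 d.
Proof. by rewrite gcdn_gt0. Qed.

Lemma mpos d : 0 < d -> 0 < d %/ gcdn 4 d.
Proof.
move=> d0; rewrite divn_gt0 ?gpos //; exact: dvdn_leq (dvdn_gcdr 4 d).
Qed.

Lemma dvd4 d n : (d %| 4 * n) = (d %/ gcdn 4 d %| n).
Proof.
set g := gcdn 4 d; set m := d %/ g; set k := 4 %/ g.
have ed : m * g = d by rewrite divnK // dvdn_gcdr.
have e4 : k * g = 4 by rewrite divnK // dvdn_gcdl.
have cop : coprime m k.
  rewrite /coprime gcdnC; apply/eqP.
  have : gcdn k m * g = 1 * g by rewrite muln_gcdl e4 ed mul1n.
  by move/eqP; rewrite eqn_pmul2r ?gpos // => /eqP.
rewrite -{1}ed -e4 mulnAC dvdn_pmul2r ?gpos //.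
by rewrite Gauss_dvdr.
Qed.


Local Open Scope ring_scope.
Definition cnd (r d big s : nat) : bool :=
  ((8 * big%:Z - 4 * s%:Z) == r%:Z %[mod d%:Z])%Z.

Lemma dvd4z d (z : int) : (d%:Z %| 4 * z)%Z = ((d %/ gcdn 4 d)%N%:Z %| z)%Z.
Proof. by rewrite !dvdzE abszM /= dvd4. Qed.

Lemma cnd_res r d big : (0 < d)%N -> (gcdn 4 d %| r)%N ->
  exists s0 : nat, forall s : nat,
    cnd r d big s = (s %% (d %/ gcdn 4 d) == s0 %% (d %/ gcdn 4 d))%N.
Proof.
move=> d0 gr; set g := gcdn 4 d; set m := (d %/ g)%N.
have [u [v Huv]] := Bezoutz 4 d%:Z.
have gE : gcdz 4 d%:Z = g%:Z by [].
rewrite gE in Huv.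
set c := 8 * big%:Z - r%:Z.
have gc : (g%:Z %| c)%Z.
  apply: rpredB; last by rewrite dvdzE.
  apply: dvdz_mulr; rewrite dvdzE /=; exact: (dvdn_trans (dvdn_gcdl 4 d)).
set C := (c %/ g%:Z)%Z.
have cE : c = C * g%:Z by rewrite divzK.
set z0 := u * C.
have dn0 : d%:Z != 0 by rewrite eqz_nat -lt0n.
set s0 := `|(z0 %% d%:Z)%Z|%N.
have s0E : s0%:Z = (z0 %% d%:Z)%Z by rewrite gez0_abs // modz_ge0.
have key : (d%:Z %| 4 * s0%:Z - c)%Z.
  have -> : 4 * s0%:Z - c = (- C * v - 4 * (z0 %/ d%:Z)%Z) * d%:Z.
    have rrE : (z0 %% d%:Z)%Z = u * C - (z0 %/ d%:Z)%Z * d%:Z.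
      have E := divz_eq z0 d%:Z; move: E; rewrite /z0.
      move: (u * C %/ d%:Z)%Z (u * C %% d%:Z)%Z => q rr E; rewrite E; ring.
    rewrite s0E rrE cE -Huv; ring.
  exact: dvdz_mull (dvdzz _).
exists s0 => s.
rewrite /cnd eqz_mod_dvd.
have -> : 8 * big%:Z - 4 * s%:Z - r%:Z = (4 * (s0%:Z - s%:Z)) - (4 * s0%:Z - c) by rewrite /c; ring.
rewrite rpredBr // dvd4z -eqz_mod_dvd !modz_nat eqz_nat eq_sym.
by [].
Qed.

Local Open Scope ring_scope.


Lemma mem_orbit (x z : pt) : (z \in Defs.orbit x) =
  ((z.1 == x.1) && (z.2 == x.2)) ||
      ((z.1 == x.2 - x.1) && (z.2 == x.2)) ||
      ((z.1 == x.2 - x.1) && (z.2 == - x.1)) ||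
      ((z.1 == - x.2) && (z.2 == - x.1)) ||
      ((z.1 == - x.2) && (z.2 == x.1 - x.2)) ||
      ((z.1 == x.1) && (z.2 == x.1 - x.2)).
Proof.
case: x z => a b [p q]; rewrite /Defs.orbit !inE /K1 /K2 /= !xpair_eqE.
apply/idP/idP; lia.
Qed.

Lemma orbitK1 x : Defs.orbit (K1 x) = Defs.orbit x.
Proof. apply/fsetP => z; rewrite !mem_orbit /K1 /=; apply/idP/idP; lia. Qed.
Lemma orbitK2 x : Defs.orbit (K2 x) = Defs.orbit x.
Proof. apply/fsetP => z; rewrite !mem_orbit /K2 /=; apply/idP/idP; lia. Qed.
Lemma lenK1 x : orbit_length (K1 x) = orbit_length x.
Proof. rewrite /orbit_length /K1 /=; lia. Qed.
Lemma lenK2 x : orbit_length (K2 x) = orbit_length x.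
Proof. rewrite /orbit_length /K2 /=; lia. Qed.

Lemma mem_grid M x : (x \in grid M) =
  [&& 0 <= x.1, x.1 <= M%:Z, 0 <= x.2 & x.2 <= M%:Z].
Proof.
case: x => a b /=; apply/allpairsP/idP.
  case=> [[i j]] [Hi Hj [-> ->]]; move: Hi Hj; cbv beta; rewrite !mem_iota.
  rewrite /=; lia.
move=> H; exists (`|a|%N, `|b|%N); cbv beta; rewrite !mem_iota /=; split; try lia.
congr (_, _); lia.
Qed.

Lemma grid_uniq M : uniq (grid M).
Proof.
apply: allpairs_uniq; try exact: iota_uniq.
by move=> [i j] [i' j'] _ _ /= [-> ->].
Qed.

Definition canon (x : pt) : bool :=
  ((0 <= x.1) && (2 * x.1 <= x.2)) || ((0 < x.2) && (2 * x.2 <= x.1)).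

Definition rep (x : pt) : pt :=
  if canon x then x else if x.2 <= 0 then K1 (K2 x)
  else if x.1 <= x.2 then K1 x else K2 x.

Lemma rep_orbit x : Defs.orbit (rep x) = Defs.orbit x.
Proof. rewrite /rep; case: ifP => _ //; case: ifP => _; rewrite ?orbitK1 ?orbitK2 //; case: ifP => _; rewrite ?orbitK1 ?orbitK2 //. Qed.

Lemma rep_len x : orbit_length (rep x) = orbit_length x.
Proof. rewrite /rep; case: ifP => _ //; case: ifP => _; rewrite ?lenK1 ?lenK2 //; case: ifP => _; rewrite ?lenK1 ?lenK2 //. Qed.

Lemma rep_grid M x : x \in grid M -> (rep x \in grid M) && canon (rep x).
Proof.
rewrite !mem_grid /rep /canon; case: x => a b /=.
case: ifP => /= H1; first lia.
case: ifP => /= H2; rewrite /K1 /K2 /=; first lia.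
case: ifP => /= H3; lia.
Qed.

Lemma canon_inj M x y : x \in grid M -> y \in grid M -> canon x -> canon y ->
  Defs.orbit x = Defs.orbit y -> x = y.
Proof.
move=> Hx Hy Cx Cy E.
have : y \in Defs.orbit x by rewrite E mem_orbit; lia.
clear E; move: Hx Hy Cx Cy; rewrite !mem_grid mem_orbit /canon; case: x => a b; case: y => p q /= *.
congr (_, _); lia.
Qed.

Lemma count_canon M (P : pred pt) :
  (forall x, P (K1 x) = P x) -> (forall x, P (K2 x) = P x) ->
  size (undup [seq Defs.orbit x | x <- grid M & P x]) =
  count (fun x => canon x && P x) (grid M).
Proof.
move=> P1 P2.
have Prep x : P (rep x) = P x.
  rewrite /rep; case: ifP => _ //; case: ifP => _; rewrite ?P1 ?P2 //; case: ifP => _; rewrite ?P1 ?P2 //.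
rewrite -size_filter -(size_map Defs.orbit).
apply: perm_size; apply: uniq_perm; first exact: undup_uniq.
  rewrite map_inj_in_uniq; first by rewrite filter_uniq // grid_uniq.
  move=> x y; rewrite !mem_filter => /andP [/andP [Cx _] Gx] /andP [/andP [Cy _] Gy].
  exact: (canon_inj _ _ _ Gx Gy Cx Cy).
move=> o; rewrite mem_undup; apply/mapP/mapP.
  case=> x; rewrite mem_filter => /andP [Px Gx] ->.
  exists (rep x); last by rewrite rep_orbit.
  by rewrite mem_filter Prep Px andbT; case/andP: (rep_grid _ _ Gx) => -> ->.
case=> x; rewrite mem_filter => /andP [/andP [_ Px] Gx] ->.
by exists x => //; rewrite mem_filter Px.
Qed.
Lemma count_allp (f : pred pt) (s t : seq nat) :
  count f [seq (i%:Z, j%:Z) | i <- s, j <- t] =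
  (\sum_(i <- s) \sum_(j <- t) f (i%:Z, j%:Z))%N.
Proof.
elim: s => [|i s IH]; first by rewrite big_nil.
by rewrite allpairs_cons count_cat IH big_cons count_map count_sum.
Qed.

Lemma point r d (i j : nat) :
  nat_of_bool (canon (i%:Z, j%:Z) && ((orbit_length (i%:Z, j%:Z) == r%:Z %[mod d%:Z])%Z))
  = (nat_of_bool ((0 <= i < (j./2).+1)%N && cnd r d j i) +
     nat_of_bool ((1 <= j < (i./2).+1)%N && cnd r d i j))%N.
Proof.
have w1 : (0 <= i < (j./2).+1)%N = (2*i <= j)%N by lia.
have w2 : (1 <= j < (i./2).+1)%N = (0 < j)%N && (2*j <= i)%N by lia.
rewrite w1 w2.
case: (leqP (2*i) j) => h /=.
  have C : canon (i%:Z, j%:Z) by rewrite /canon /=; lia.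
  have L : orbit_length (i%:Z, j%:Z) = 8 * j%:Z - 4 * i%:Z by rewrite /orbit_length /=; lia.
  have -> : ((0 < j)%N && (2*j <= i)%N) = false by lia.
  by rewrite C L /cnd /= addn0.
case: (boolP ((0 < j)%N && (2*j <= i)%N)) => h2 /=.
  have C : canon (i%:Z, j%:Z) by rewrite /canon /=; lia.
  have L : orbit_length (i%:Z, j%:Z) = 8 * i%:Z - 4 * j%:Z by rewrite /orbit_length /=; lia.
  by rewrite C L /cnd.
have C : canon (i%:Z, j%:Z) = false by rewrite /canon /=; lia.
by rewrite C.
Qed.

Lemma decomp r d M :
  count (fun x => canon x && (orbit_length x == r%:Z %[mod d%:Z])%Z) (grid M) =
  (\sum_(j <- iota 0 M.+1) count (cnd r d j) (iota 0 (j./2).+1) +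
   \sum_(i <- iota 0 M.+1) count (cnd r d i) (iota 1 i./2))%N.
Proof.
rewrite count_allp.
under eq_bigr do under eq_bigr do rewrite point.
under eq_bigr do rewrite big_split.
rewrite big_split exchange_big.
congr (_ + _)%N.
  rewrite big_seq_cond [RHS]big_seq_cond; apply: eq_bigr => j /andP [jM _].
  rewrite count_window ?subn0 //; move: jM; rewrite mem_iota; lia.
rewrite big_seq_cond [RHS]big_seq_cond; apply: eq_bigr => i /andP [iM _].
rewrite count_window ?subn1 //; move: iM; rewrite mem_iota; lia.
Qed.

Lemma term_bound r d big lo n : (0 < d)%N -> (gcdn 4 d %| r)%N ->
  ((count (cnd r d big) (iota lo n) * (d %/ gcdn 4 d) <= n + (d %/ gcdn 4 d)) &&
   (n <= count (cnd r d big) (iota lo n) * (d %/ gcdn 4 d) + (d %/ gcdn 4 d)))%N.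
Proof.
move=> d0 gr.
have [s0 Hs0] := cnd_res r d big d0 gr.
rewrite (eq_count Hs0); exact: (count_res _ _ _ _ (mpos _ d0)).
Qed.

Lemma main_bound r d M : (0 < d)%N -> (gcdn 4 d %| r)%N -> (1 <= M)%N ->
  (2 * (d %/ gcdn 4 d) * N_count r d M <= M * M + (8 * (d %/ gcdn 4 d) + 4) * M)%N /\
  (M * M <= 2 * (d %/ gcdn 4 d) * N_count r d M + (8 * (d %/ gcdn 4 d) + 4) * M)%N.
Proof.
move=> d0 gr M1; set m := (d %/ gcdn 4 d)%N.
have m0 : (0 < m)%N := mpos _ d0.
rewrite /N_count count_canon; last first.
- by move=> x; rewrite lenK2.
- by move=> x; rewrite lenK1.
rewrite decomp.
set T1 := (\sum_(j <- _) _)%N; set T2 := (\sum_(i <- _) _)%N.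
have U1 : (T1 * m <= \sum_(j <- iota 0 M.+1) j./2 + M.+1 * (m + 1))%N.
  rewrite -{2}(size_iota 0 M.+1); apply: sum_up => j _.
  have := term_bound r d j 0 (j./2).+1 d0 gr; rewrite -/m; lia.
have L1 : (\sum_(j <- iota 0 M.+1) j./2 <= T1 * m + M.+1 * m)%N.
  rewrite -{2}(size_iota 0 M.+1); apply: sum_lo => j _.
  have := term_bound r d j 0 (j./2).+1 d0 gr; rewrite -/m; lia.
have U2 : (T2 * m <= \sum_(j <- iota 0 M.+1) j./2 + M.+1 * m)%N.
  rewrite -{2}(size_iota 0 M.+1); apply: sum_up => j _.
  have := term_bound r d j 1 j./2 d0 gr; rewrite -/m; lia.
have L2 : (\sum_(j <- iota 0 M.+1) j./2 <= T2 * m + M.+1 * m)%N.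
  rewrite -{2}(size_iota 0 M.+1); apply: sum_lo => j _.
  have := term_bound r d j 1 j./2 d0 gr; rewrite -/m; lia.
have H := sum_half M.
have P1 : (m <= M * m)%N by rewrite leq_pmull.
have E1 : (2 * m * (T1 + T2) = 2 * (T1 * m) + 2 * (T2 * m))%N by ring.
have E2 : ((8 * m + 4) * M = 8 * (M * m) + 4 * M)%N by ring.
have E3 : (M.+1 * (m + 1) = M * m + m + M + 1)%N by ring.
have E4 : (M.+1 * m = M * m + m)%N by ring.
rewrite E1 E2; rewrite E3 in U1; rewrite E4 in L1 U2 L2.
move: U1 L1 U2 L2 H P1; move: (\sum_(j <- iota 0 M.+1) j./2)%N => S.
move: (T1 * m)%N (T2 * m)%N (M * m)%N (M * M)%N => a b p q.
lia.
Qed.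

Lemma len4 x : (4 %| orbit_length x)%Z.
Proof. rewrite /orbit_length; lia. Qed.

Lemma noneq g0 d r x : (g0 %| 4)%N -> (g0 %| d)%N -> ~~ (g0 %| r)%N ->
  ~~ (orbit_length x == r%:Z %[mod d%:Z])%Z.
Proof.
move=> g4 gd gr; rewrite eqz_mod_dvd; apply/negP => H.
have H1 : (g0%:Z %| orbit_length x - r%:Z)%Z by apply: dvdz_trans H; rewrite dvdzE.
have H2 : (g0%:Z %| orbit_length x)%Z by apply: dvdz_trans (len4 x); rewrite dvdzE.
have : (g0%:Z %| r%:Z)%Z.
  have -> : r%:Z = orbit_length x - (orbit_length x - r%:Z) by ring.
  exact: rpredB.
by rewrite dvdzE /= (negbTE gr).
Qed.

Lemma to_rat (N M m K : nat) (c : rat) : (0 < m)%N -> c = 1 / (2 * m)%N%:R ->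
  (2 * m * N <= M * M + K * M)%N -> (M * M <= 2 * m * N + K * M)%N ->
  `| N%:R - c * M%:R ^+ 2 | <= K%:R * M%:R.
Proof.
move=> m0 -> h1 h2.
set t : rat := (2 * m)%N%:R.
have tp : 1 <= t by rewrite /t ler1n; lia.
have t0 : t != 0 by apply: lt0r_neq0; exact: lt_le_trans ltr01 tp.
have e : N%:R - 1 / t * M%:R ^+ 2 = (t * N%:R - M%:R ^+ 2) / t.
  by rewrite mulrBl [t * _]mulrC mulfK // mul1r mulrC.
have h1' : t * N%:R <= M%:R ^+ 2 + K%:R * M%:R.
  by rewrite /t expr2 -!natrM -natrD ler_nat.
have h2' : M%:R ^+ 2 <= t * N%:R + K%:R * M%:R.
  by rewrite /t expr2 -!natrM -natrD ler_nat.
have X0 : 0 <= K%:R * M%:R :> rat by rewrite -natrM ler0n.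
have Xt : K%:R * M%:R <= K%:R * M%:R * t by rewrite ler_peMr.
rewrite e ler_norml ler_pdivrMr ?ler_pdivlMr ?mulNr; try exact: lt_le_trans ltr01 tp.
move: h1' h2' X0 Xt; move: (t * N%:R) (K%:R * M%:R) (K%:R * M%:R * t) (M%:R ^+ 2 : rat) => a b bt q.
move=> *; apply/andP; split; lra.
Qed.

Theorem theorem1p3 (d r : nat) (hd : (2 <= d)%N) (hr : (r <= d - 1)%N) :
  ( ((2 %| d)%N && ~~ (4 %| d)%N && ~~ (2 %| r)%N) || ((4 %| d)%N && ~~ (4 %| r)%N) ->
      forall M : nat, (1 <= M)%N -> N_count r d M = 0%N ) /\
  ( (2 %| d)%N && ~~ (4 %| d)%N && (2 %| r)%N ->
      exists C : rat, forall M : nat, (1 <= M)%N ->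
        `| (N_count r d M)%:R - (1 / d%:R) * (M%:R) ^+ 2 | <= C * M%:R ) /\
  ( (4 %| d)%N && (4 %| r)%N ->
      exists C : rat, forall M : nat, (1 <= M)%N ->
        `| (N_count r d M)%:R - (2 / d%:R) * (M%:R) ^+ 2 | <= C * M%:R ) /\
  ( ~~ (2 %| d)%N ->
      exists C : rat, forall M : nat, (1 <= M)%N ->
        `| (N_count r d M)%:R - (1 / (2 * d%:R)) * (M%:R) ^+ 2 | <= C * M%:R ).
Proof.
have d0 : (0 < d)%N by lia.
have gd : (gcdn 4 d %| d)%N := dvdn_gcdr 4 d.
have ed : (d %/ gcdn 4 d * gcdn 4 d = d)%N := divnK gd.
have m0 : (0 < d %/ gcdn 4 d)%N := mpos _ d0.
have fin : (gcdn 4 d %| r)%N -> forall c : rat, c = 1 / (2 * (d %/ gcdn 4 d))%N%:R ->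
    exists C : rat, forall M : nat, (1 <= M)%N ->
      `| (N_count r d M)%:R - c * (M%:R) ^+ 2 | <= C * M%:R.
  move=> gr c ce; exists (8 * (d %/ gcdn 4 d) + 4)%N%:R => M M1.
  have [h1 h2] := main_bound r d M d0 gr M1.
  exact: to_rat m0 ce h1 h2.
split; [|split; [|split]].
- case/orP => [/andP [/andP [d2 n4] r2] | /andP [d4 r4]] M _; rewrite /N_count.
    rewrite (@eq_filter _ _ pred0) ?filter_pred0 // => x.
    by apply/negbTE; apply: noneq r2.
  rewrite (@eq_filter _ _ pred0) ?filter_pred0 // => x.
  by apply/negbTE; apply: noneq r4.
- move=> /andP [/andP [d2 n4] r2].
  have g2 : gcdn 4 d = 2%N.
    have g4 : (gcdn 4 d <= 4)%N := dvdn_leq (isT : (0 < 4)%N) (dvdn_gcdl 4 d).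
    have g0 : (0 < gcdn 4 d)%N := gpos d.
    have g2 : (2 %| gcdn 4 d)%N by rewrite dvdn_gcd d2.
    have gn4 : gcdn 4 d != 4%N.
      by apply: contraNneq n4 => <-.
    lia.
  apply: fin; first by rewrite g2.
  by rewrite -{1}ed g2 mulnC.
- move=> /andP [d4 r4].
  have g4 : gcdn 4 d = 4%N by apply/gcdn_idPl.
  apply: fin; first by rewrite g4.
  rewrite -{1}ed g4.
  have -> : (d %/ 4 * 4 = 2 * (2 * (d %/ 4)))%N by ring.
  rewrite (natrM _ 2) -[2%:R]/(2 : rat).
  have nz : (2 * (d %/ 4))%N%:R != 0 :> rat by rewrite pnatr_eq0; lia.
  by rewrite invfM mulrA divff // mul1r.
- move=> od.
  have g1 : gcdn 4 d = 1%N.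
    have : coprime (2 ^ 2) d by rewrite coprime_pexpl // coprime2n; move: od; rewrite dvdn2 negbK.
    by move/eqP.
  apply: fin; first by rewrite g1.
  by rewrite g1 divn1 natrM.
Qed.
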